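(* Let $n \in \mathbb{Z}_{\geqslant 2}$ and $m \in \mathbb{Z}_{\geqslant 1}$. Then $$\prod_{j=1}^{\infty}\left(1 - \frac{1}{n^j}\right) n^{\varphi(m)} \leqslant \Phi_m(n) \leqslant \prod_{j=1}^{\infty}\left(1 - \frac{1}{n^j}\right)^{-1} n^{\varphi(m)}.$$
   Context: $\Phi_m(X)$ denotes the $m$th cyclotomic polynomial and $\varphi$ is Euler's totient function. *)

(* Defs.v *)
From HB Require Import structures.
From mathcomp Require Import all_boot all_order all_algebra all_field.
From mathcomp Require Import all_classical all_reals all_analysis.
Set Implicit Arguments. Unset Strict Implicit. Unset Printing Implicit Defensive.
Import Order.TTheory GRing.Theory Num.Theory.
Import numFieldNormedType.Exports.
Local Open Scope ring_scope.

Definition euler_partial (R : realType) (n : nat) (N : nat) : R :=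
  \prod_(1 <= j < N.+1) (1 - (n%:R ^+ j)^-1).

(* The infinite product prod_{j>=1} (1 - 1/n^j), as the limit of the
   partial products (which converge for n >= 2). *)
Definition euler_prod (R : realType) (n : nat) : R :=
  limn (euler_partial R n).

(* Main.v *)
Require Import Defs.
From HB Require Import structures.
From mathcomp Require Import all_boot all_order all_algebra all_field.
From mathcomp Require Import all_classical all_reals all_analysis.
From mathcomp Require Import zify lra.
Import Order.TTheory GRing.Theory Num.Theory.
Local Open Scope ring_scope.

Module Aux.
Set Implicit Arguments. Unset Strict Implicit. Unset Printing Implicit Defensive.
Import numFieldNormedType.Exports.
Definition sqf (d : nat) : bool := all (fun p => ~~ (p * p %| d)%N) (primes d).
Definition mu (d : nat) : int := if sqf d then (-1) ^+ size (primes d) else 0.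

Lemma primes_pM p d : prime p -> (0 < d)%N -> ~~ (p %| d)%N ->
  perm_eq (primes (p * d)) (p :: primes d).
Proof.
move=> pp d0 npd; apply: uniq_perm.
- exact: primes_uniq.
- rewrite /= primes_uniq andbT mem_primes negb_and negb_and npd; by rewrite !orbT.
move=> q; rewrite inE !mem_primes muln_gt0 prime_gt0 // d0 /=.
apply/idP/idP.
- case/andP=> qp; rewrite Euclid_dvdM // dvdn_prime2 // => /orP[->//|->].
  by rewrite qp orbT.
- case/orP=> [/eqP->|/andP[qp qd]]; first by rewrite pp dvdn_mulr.
  by rewrite qp dvdn_mull.
Qed.

Lemma mu_pM p d : prime p -> (0 < d)%N -> ~~ (p %| d)%N -> mu (p * d) = - mu d.
Proof.
move=> pp d0 npd; rewrite /mu.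
have E : sqf (p * d) = sqf d.
  rewrite /sqf (perm_all _ (primes_pM pp d0 npd)) /= dvdn_pmul2l ?prime_gt0 //.
  rewrite npd /=; apply: eq_in_all => q; rewrite mem_primes => /and3P[qp _ qd].
  have qnp : q != p by apply: contraNneq npd => <-.
  rewrite Gauss_dvdr //; rewrite coprimeMl !prime_coprime // dvdn_prime2 //.
  idtac.
  by apply/andP; split.
rewrite E (perm_size (primes_pM pp d0 npd)) /=; case: (sqf d) => //.
by rewrite exprS mulN1r.
Qed.

Lemma mu_pM0 p d : prime p -> (0 < d)%N -> (p %| d)%N -> mu (p * d) = 0.
Proof.
move=> pp d0 pd; rewrite /mu /sqf.
have -> : all (fun q => ~~ (q * q %| p * d)%N) (primes (p * d)) = false.
  apply/negbTE/allPn; exists p; first by rewrite mem_primes pp muln_gt0 prime_gt0 // d0 dvdn_mulr.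
  by rewrite dvdn_pmul2l ?prime_gt0 // negbK.
by [].
Qed.

Lemma mu1 : mu 1 = 1.
Proof. by []. Qed.

Lemma norm_mu d : `|mu d| <= 1.
Proof. by rewrite /mu; case: sqf; rewrite ?normrX ?normrN1 ?expr1n. Qed.

Lemma big_dvd_reindex (R : Type) (idx : R) (op : Monoid.com_law idx) e N
  (P : pred nat) (F : nat -> R) : (0 < e)%N ->
  \big[op/idx]_(0 <= d < N | (e %| d)%N && P d) F d =
  \big[op/idx]_(0 <= c < N | P (e * c)%N && (e * c < N)%N) F (e * c)%N.
Proof.
move=> e0; rewrite -big_filter -[RHS]big_filter.
rewrite -(big_map (muln e) xpredT F); apply: perm_big; apply: uniq_perm.
- by rewrite filter_uniq // iota_uniq.
- by rewrite map_inj_uniq ?filter_uniq ?iota_uniq //; move=> a b /eqP; rewrite eqn_pmul2l // => /eqP.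
move=> d; rewrite mem_filter mem_index_iota /=; apply/idP/idP.
- case/andP=> /andP[/dvdnP[c ->] Pd] dN; apply/mapP; exists c; last by rewrite mulnC.
  rewrite mem_filter mem_index_iota /= mulnC Pd dN /=.
  by apply: leq_ltn_trans dN; exact: leq_pmulr.
- case/mapP=> c; rewrite mem_filter mem_index_iota /= => /andP[/andP[Pc ecN] cN] ->.
  by rewrite dvdn_mulr // Pc.
Qed.

Lemma Kmu k N : (0 < k)%N -> (k < N)%N ->
  \sum_(0 <= d < N | (d %| k)%N) mu d = (k == 1)%:Z.
Proof.
move=> k0 kN; have [k1|k1] := eqVneq k 1.
  subst k.
  rewrite big_mkcond (bigD1_seq 1) ?mem_index_iota ?iota_uniq /=.
  rewrite [X in _ + X]big1; first by rewrite addr0.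
  by move=> d /negbTE; rewrite dvdn1 => ->.
  exact: kN.
  by [].
have k2 : (1 < k)%N by rewrite ltn_neqAle eq_sym k1.
set p := pdiv k; have pp : prime p := pdiv_prime k2.
have pk : (p %| k)%N := pdiv_dvd k.
set q := (k %/ p)%N; have hk : k = (p * q)%N by rewrite mulnC divnK.
have q0 : (0 < q)%N by move: k0; rewrite hk muln_gt0 => /andP[].
rewrite (bigID (fun d => p %| d)%N) /=.
rewrite (eq_bigl (fun d => (p %| d)%N && (d %| k)%N)); last by move=> d; rewrite andbC.
rewrite big_dvd_reindex ?prime_gt0 //.
rewrite (eq_bigl (fun c => (c %| q)%N)); last first.
  move=> c; rewrite {1}hk dvdn_pmul2l ?prime_gt0 //; case cq: (c %| q)%N => //=.
  apply: leq_ltn_trans kN; rewrite hk leq_mul //; exact: dvdn_leq cq.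
rewrite (bigID (fun c => p %| c)%N) /= big1; last first.
  by move=> c /andP[cq pc]; rewrite mu_pM0 // (dvdn_gt0 q0 cq).
rewrite add0r (eq_bigr (fun c => - mu c)); last first.
  by move=> c /andP[cq pc]; rewrite mu_pM // (dvdn_gt0 q0 cq).
rewrite [X in _ + X](eq_bigl (fun d => (d %| q)%N && ~~ (p %| d)%N)); last first.
  move=> d; case pd: (p %| d)%N; rewrite ?andbF ?andbT //.
  rewrite hk Gauss_dvdr // coprime_sym prime_coprime // pd //.
by rewrite sumrN addNr.
Qed.

Lemma prodXz (F : fieldType) (I : Type) (x : F) (r : seq I) (P : pred I) (f : I -> int) :
  x != 0 -> \prod_(i <- r | P i) x ^ f i = x ^ (\sum_(i <- r | P i) f i).
Proof.
move=> x0; elim/big_rec2: _ => [|i a b Pi ->]; first by rewrite expr0z.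
by rewrite exprzDr // unitfE.
Qed.

Section Mobius.
Variable F : fieldType.
Variable a : nat -> F.
Hypothesis a0 : forall d, (0 < d)%N -> a d != 0.

Definition mobh k := \prod_(0 <= d < k.+1 | (d %| k)%N) a d ^ mu (k %/ d).

Lemma mobh_neq0 i : (0 < i)%N -> mobh i != 0.
Proof.
move=> i0; rewrite /mobh prodf_seq_neq0; apply/allP => d _; apply/implyP => di.
by rewrite expfz_neq0 // a0 // (dvdn_gt0 i0 di).
Qed.

Lemma mob_sum k : (0 < k)%N -> \prod_(0 <= d < k.+1 | (d %| k)%N) mobh d = a k.
Proof.
move=> k0; rewrite /mobh.
rewrite (eq_bigr (fun d => \prod_(0 <= e < k.+1 | (e %| d)%N) a e ^ mu (d %/ e))); last first.
  move=> d dk; have d0 := dvdn_gt0 k0 dk.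
  rewrite (big_nat_widen 0 d.+1 k.+1); last by rewrite ltnS dvdn_leq.
  apply: eq_bigl => e.
  by case ed: (e %| d)%N => //=; rewrite ltnS dvdn_leq.
rewrite (exchange_big_dep_nat (fun e => e %| k)%N) /=; last first.
  by move=> d e _ _ dk ed; apply: dvdn_trans ed dk.
rewrite (eq_bigr (fun e => a e ^ ((k %/ e == 1)%N : int))); last first.
  move=> e ek; have e0 := dvdn_gt0 k0 ek.
  rewrite prodXz ?a0 //; congr (_ ^ _).
  rewrite (eq_bigl (fun d => (e %| d)%N && (d %| k)%N)); last by move=> d; rewrite andbC.
  rewrite big_dvd_reindex //.
  rewrite (eq_bigr (fun c => mu c)); last by move=> c _; rewrite mulKn.
  have hk : k = (e * (k %/ e))%N by rewrite mulnC divnK.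
  rewrite (eq_bigl (fun c => (c %| k %/ e)%N)); last first.
    move=> c; have -> : (e * c %| k)%N = (c %| k %/ e)%N by rewrite {1}hk dvdn_pmul2l.
    case ck: (c %| k %/ e)%N => //=; rewrite ltnS.
    have h : (e * c %| k)%N by rewrite [X in (_ %| X)%N]hk dvdn_pmul2l.
    exact: dvdn_leq k0 h.
  rewrite Kmu.
  - by [].
  - by rewrite divn_gt0 //; exact: dvdn_leq k0 ek.
  - by rewrite ltnS leq_div.
rewrite big_mkcond big_nat_recr; last by [].
rewrite dvdnn divnn k0 eqxx expr1z.
rewrite big_nat_cond big1 /=; first by rewrite mul1r.
move=> e; rewrite andbT => ek.
case: ifP => // edk.
case: eqP => [h|_]; last by rewrite expr0z.
have ke : k = e by rewrite -(divnK edk) h mul1n.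
by rewrite ke ltnn in ek.
Qed.

Lemma mob_inv (b : nat -> F) m :
  (forall k, (0 < k)%N -> \prod_(0 <= d < k.+1 | (d %| k)%N) b d = a k) ->
  (0 < m)%N -> b m = mobh m.
Proof.
move=> hb; elim/ltn_ind: m => m IH m0.
have := hb m m0; rewrite -(mob_sum m0).
rewrite big_mkcond [X in _ = X -> _]big_mkcond big_nat_recr //= big_nat_recr //= dvdnn.
rewrite (@eq_big_nat _ _ _ 0 m _ (fun i => if (i %| m)%N then mobh i else 1)); last first.
  move=> i /andP[_ im]; case: ifP => // id; apply: IH => //.
  exact: dvdn_gt0 m0 id.
apply: mulfI; rewrite prodf_seq_neq0; apply/allP => d _; apply/implyP => _.
case: ifP => [dm|_]; last exact: oner_neq0.
by apply: mobh_neq0; apply: dvdn_gt0 m0 dm.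
Qed.
End Mobius.

Lemma expz_bound (R : realFieldType) (a : R) (z : int) :
  0 < a -> a <= 1 -> `|z| <= 1 -> 0 < a ^ z /\ a <= a ^ z <= a^-1.
Proof.
move=> a0 a1 hz; split; first exact: exprz_gt0.
have ai : 1 <= a^-1 by rewrite invf_ge1.
case: z hz => [[|[|k]]|[|k]] hz.
- by rewrite expr0z a1.
- by rewrite expr1z lexx /= (le_trans a1 ai).
- by [].
- by rewrite NegzE exprN1 lexx andbT (le_trans a1 ai).
- by [].
Qed.

Lemma prod_bound (R : realFieldType) (I : eqType) (r : seq I) (a : I -> R)
    (e : I -> int) (Q : pred I) :
  (forall j, j \in r -> 0 < a j <= 1) -> (forall j, `|e j| <= 1) ->
  0 < \prod_(j <- r) a j /\
  \prod_(j <- r) a j <= \prod_(j <- r | Q j) a j ^ e j <= (\prod_(j <- r) a j)^-1.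
Proof.
elim: r => [|x r IH] ha he; first by rewrite !big_nil invr1 lexx ltr01.
have [L0 /andP[l u]] := IH (fun j jr => ha j (mem_behead (s := x :: r) jr)) he.
rewrite !big_cons; have /andP[ax0 ax1] := ha x (mem_head x r).
set L := \prod_(j <- r) a j in L0 l u *; set M := \prod_(j <- r | Q j) a j ^ e j in l u *.
have M0 : 0 < M by apply: lt_le_trans l.
have axi : 1 <= (a x)^-1 by rewrite invf_ge1.
split; first exact: mulr_gt0.
rewrite invfM; case: (Q x).
- have [f0 /andP[lf uf]] := expz_bound ax0 ax1 (he x).
  apply/andP; split; first by apply: ler_pM => //; apply: ltW.
  by apply: ler_pM => //; apply: ltW.
- apply/andP; split.
    by apply: le_trans l; apply: ler_piMl => //; apply: ltW.
  by apply: le_trans u _; apply: ler_peMl => //; rewrite invr_ge0 ltW.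
Qed.


Section Euler.
Variables (R : realType) (n : nat).
Hypothesis hn : (2 <= n)%N.
Let x : R := n%:R.

Lemma x_ge2 : 2 <= x.
Proof. by rewrite /x (ler_nat R 2 n). Qed.

Lemma a_bounds j : (0 < j)%N -> 0 < 1 - (x ^+ j)^-1 <= 1.
Proof.
move=> j0; have x1 : 1 < x by apply: lt_le_trans x_ge2; rewrite ltr1n.
have xj : 1 < x ^+ j by rewrite exprn_egt1 // -lt0n.
have xj0 : 0 < x ^+ j by apply: lt_trans xj.
rewrite subr_gt0 invf_lt1 // xj /= lerBlDr lerDl invr_ge0 ltW //.
Qed.

Lemma ep_rec N : euler_partial R n N.+1 = euler_partial R n N * (1 - (x ^+ N.+1)^-1).
Proof. by rewrite /euler_partial big_nat_recr. Qed.

Lemma ep0 : euler_partial R n 0 = 1.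
Proof. by rewrite /euler_partial big_geq. Qed.

Lemma ep_ge N : 1/4 + (x ^+ N.+1)^-1 / 2 <= euler_partial R n N.+1.
Proof.
have x2 := x_ge2.
have x0 : 0 < x by apply: lt_le_trans x2.
have t0 : 0 < x^-1 by rewrite invr_gt0.
have t2 : x^-1 <= 1/2.
  rewrite mul1r lef_pV2 ?posrE ?ltr0n //; exact: ltnW hn.
elim: N => [|N IH].
  by rewrite ep_rec ep0 mul1r expr1; lra.
rewrite ep_rec exprS invfM.
set w := (x ^+ N.+1)^-1 in IH *; set t := x^-1 in t0 t2 *.
have w0 : 0 < w by rewrite invr_gt0 exprn_gt0.
have w2 : w <= 1/2.
  rewrite /w; apply: le_trans t2; rewrite lef_pV2 ?posrE ?exprn_gt0 //.
  by rewrite -[X in X <= _]expr1 ler_eXn2l // ?ltr1n ?(lt_le_trans _ x2) ?ltr1n.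
set e := euler_partial R n N.+1 in IH *.
have tw : t * w <= 1/4 by have := ler_pM (ltW t0) (ltW w0) t2 w2; lra.
have h1 : 0 <= (e - (1/4 + w/2)) * (1 - t * w) by apply: mulr_ge0; lra.
have h2 : 0 <= w * (1/2 - 3/4 * t - t * w / 2) by apply: mulr_ge0; nra.
nra.
Qed.

Lemma ep_ge4 N : 1/4 <= euler_partial R n N.
Proof.
case: N => [|N]; first by rewrite ep0; lra.
apply: le_trans (ep_ge N); rewrite lerDl divr_ge0 // invr_ge0 exprn_ge0 //.
Qed.

Lemma ep_decr N : euler_partial R n N.+1 <= euler_partial R n N.
Proof.
rewrite ep_rec; apply: ler_piMr; first by apply: le_trans (ep_ge4 N); lra.
by case/andP: (a_bounds (ltn0Sn N)).
Qed.

Lemma ep_cvg : cvgn (euler_partial R n).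
Proof.
apply: nonincreasing_is_cvgn; first by apply/nonincreasing_seqP => N; exact: ep_decr.
by exists 0 => _ [N _ <-]; apply: le_trans (ep_ge4 N); lra.
Qed.

Lemma E_le N : euler_prod R n <= euler_partial R n N.
Proof.
apply: nonincreasing_cvgn_ge; last exact: ep_cvg.
by apply/nonincreasing_seqP => k; exact: ep_decr.
Qed.

Lemma E_ge : 1/4 <= euler_prod R n.
Proof. by apply: limr_ge; [exact: ep_cvg | apply: nearW => N; exact: ep_ge4]. Qed.
End Euler.

Lemma divisors_big (T : Type) (idx : T) (op : Monoid.com_law idx) m (F : nat -> T) :
  (0 < m)%N ->
  \big[op/idx]_(d <- divisors m) F d = \big[op/idx]_(0 <= d < m.+1 | (d %| m)%N) F d.
Proof.
move=> m0; rewrite -[RHS]big_filter; apply: perm_big; apply: uniq_perm.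
- exact: divisors_uniq.
- by rewrite filter_uniq // iota_uniq.
move=> d; rewrite mem_filter mem_index_iota -dvdn_divisors //.
by case dm: (d %| m)%N => //=; rewrite ltnS dvdn_leq.
Qed.

Lemma sum_totient m : (0 < m)%N -> (\sum_(d <- divisors m) totient d)%N = m.
Proof.
move=> m0.
have H : ((\sum_(d <- divisors m) size ('Phi_d : {poly int})).+1 - size (divisors m))%N = m.+1.
  rewrite -size_prod_seq; last by move=> d _; apply: monic_neq0; apply: Cyclotomic_monic.
  by rewrite prod_Cyclotomic // size_XnsubC.
rewrite (eq_bigr (fun d => (totient d + 1)%N)) in H; last by move=> d _; rewrite addn1; exact: size_Cyclotomic.
rewrite big_split /= sum1_size in H.
move: H; set S := (\sum_(i <- divisors m) totient i)%N; set s := size _.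
lia.
Qed.

Lemma prod_Phi_eval (R : realType) (n k : nat) : (0 < k)%N ->
  \prod_(d <- divisors k) ((('Phi_d).[n%:Z] : int)%:~R : R) = n%:R ^+ k - 1.
Proof.
move=> k0; rewrite -rmorph_prod -horner_prod prod_Cyclotomic //.
by rewrite !hornerE /= intrB rmorphXn.
Qed.


End Aux.
Import Aux.

Theorem lemma2 (R : realType) (n m : nat) (hn : (2 <= n)%N) (hm : (1 <= m)%N) :
  euler_prod R n * n%:R ^+ totient m <= ((('Phi_m).[n%:Z] : int)%:~R : R)
  /\ ((('Phi_m).[n%:Z] : int)%:~R : R) <= (euler_prod R n)^-1 * n%:R ^+ totient m.
Proof.
pose a j : R := 1 - (n%:R ^+ j)^-1.
pose b d : R := ((('Phi_d).[n%:Z] : int)%:~R) / n%:R ^+ totient d.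
have x0 : 0 < n%:R :> R by rewrite ltr0n; apply: leq_trans hn.
have a0 : forall d, (0 < d)%N -> a d != 0.
  by move=> d d0; have /andP[h _] := a_bounds R hn d0; rewrite lt0r_neq0.
have hb : forall k, (0 < k)%N -> \prod_(0 <= d < k.+1 | (d %| k)%N) b d = a k.
  move=> k k0; rewrite -divisors_big // prodf_div prod_Phi_eval // prodrXr sum_totient //.
  by rewrite /a mulrBl divff ?mul1r // expf_neq0 // lt0r_neq0.
have bm := mob_inv a0 hb hm.
have Phi_eq : ((('Phi_m).[n%:Z] : int)%:~R : R) = b m * n%:R ^+ totient m.
  by rewrite /b divfK // expf_neq0 // lt0r_neq0.
rewrite Phi_eq bm /mobh big_ltn_cond //.
have -> : (0 %| m)%N = false by rewrite dvd0n; case: m hm {Phi_eq bm}.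
have ha : forall j, j \in index_iota 1 m.+1 -> 0 < a j <= 1.
  by move=> j; rewrite mem_index_iota => /andP[j0 _]; apply: a_bounds.
have [P0 /andP[lo up]] := @prod_bound R nat (index_iota 1 m.+1) a (fun d => mu (m %/ d)) (fun d => (d %| m)%N) ha (fun d => norm_mu _).
have EP : euler_prod R n <= \prod_(j <- index_iota 1 m.+1) a j := E_le R hn m.
have E0 : 0 < euler_prod R n by apply: lt_le_trans (E_ge R hn); lra.
have xp : 0 <= n%:R ^+ totient m :> R by rewrite exprn_ge0 // ltW.
split; apply: ler_wpM2r => //; first exact: le_trans EP lo.
apply: le_trans up _; rewrite lef_pV2 ?posrE //.
Qed.
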